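(* Let $f:\mathbb{F}_2^n\to\mathbb{F}_2^n$ be a nonsingular linear transformation and let $M$ be its matrix with respect to the standard basis. Then $f$ is closed neighbor balanced if and only if every row of $M$ contains exactly $(n+1)/2$ entries equal to $1$.
   Context: $Q_n$ is the hypercube on $\mathbb{F}_2^n$ (adjacency iff differing in exactly one coordinate); the closed neighborhood of $\boldsymbol{u}$ is $N[\boldsymbol{u}]=\{\boldsymbol{u}\}\cup\{\boldsymbol{u}+\boldsymbol{e}_j: j=1,\dots,n\}$, where $\boldsymbol{e}_j$ are the standard basis vectors. A subset $A\subseteq\mathbb{F}_2^n$ is balanced if for every coordinate $i$, the number of $\boldsymbol{a}\in A$ with $a_i=1$ equals $|A|/2$. A bijection $f:\mathbb{F}_2^n\to\mathbb{F}_2^n$ is closed neighbor balanced if $f(N[\boldsymbol{u}])$ is balanced for every $\boldsymbol{u}\in\mathbb{F}_2^n$. *)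

(* Defs.v *)
From mathcomp Require Import all_boot all_algebra.
Set Implicit Arguments. Unset Strict Implicit. Unset Printing Implicit Defensive.
Import GRing.Theory.
Local Open Scope ring_scope.

Definition vec (n : nat) := 'cV['F_2]_n.

Definition e_ (n : nat) (j : 'I_n) : vec n := delta_mx j 0.

Definition closed_nbhd (n : nat) (u : vec n) : {set vec n} :=
  u |: [set u + e_ j | j : 'I_n].

(* A is balanced: for every coordinate i, exactly |A|/2 elements have a_i = 1
   (stated without division: 2 * #{a in A | a_i = 1} = |A|). *)
Definition balanced (n : nat) (A : {set vec n}) : Prop :=
  forall i : 'I_n, (2 * #|[set a in A | a i ord0 == 1%R]| = #|A|)%N.

Definition closed_neighbor_balanced (n : nat) (f : vec n -> vec n) : Prop :=
  bijective f /\ forall u : vec n, balanced (f @: closed_nbhd u).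

(* Main.v *)
Require Import Defs.
From mathcomp Require Import all_boot all_algebra.
Local Open Scope ring_scope.
Import GRing.Theory.

Lemma F2_cases (x : 'F_2) : x = 0 \/ x = 1.
Proof. move: x => [[|[|k]] Hk]; [left|right|by []]; exact/val_inj. Qed.

Lemma card_opt (I : finType) (Q : pred (option I)) :
  #|[set o | Q o]| = (Q None + #|[set j | Q (Some j)]|)%N.
Proof.
have E : [set o | Q o] = (if Q None then None |: (Some @: [set j | Q (Some j)])
            else Some @: [set j | Q (Some j)]).
  apply/setP => -[j|]; case: ifP => HN; rewrite ?inE ?HN //=.
  - by rewrite mem_imset ?inE //; exact: Some_inj.
  - by rewrite mem_imset ?inE //; exact: Some_inj.
  - by apply/esym/negP => /imsetP [k _].
case: ifP E => HN ->; last by rewrite card_imset //; exact: Some_inj.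
rewrite cardsU1 card_imset; last exact: Some_inj.
by rewrite (_ : (None \notin _) = true) //; apply/negP => /imsetP [k _].
Qed.

Lemma e_inj n : injective (@e_ n).
Proof.
move=> j k /matrixP /(_ j 0); rewrite /e_ !mxE !eqxx /=.
by case: (j =P k) => // _ /eqP; rewrite eq_sym oner_eq0.
Qed.

Lemma e_neq0 n (j : 'I_n) : e_ j != 0.
Proof.
apply/negP => /eqP /matrixP /(_ j 0); rewrite /e_ !mxE !eqxx /= => /eqP.
by rewrite oner_eq0.
Qed.

Section S.
Variables (n : nat) (M : 'M['F_2]_n) (u : vec n).
Hypothesis HM : M \in unitmx.

Definition g (o : option 'I_n) : vec n := oapp (fun j => u + e_ j) u o.

Lemma g_inj : injective g.
Proof.
move=> [j|] [k|] //= H.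
- by congr Some; apply: e_inj; apply: (addrI u).
- have := @e_neq0 n j; rewrite (_ : e_ j = 0) ?eqxx //; apply: (addrI u); by rewrite H addr0.
- have := @e_neq0 n k; rewrite (_ : e_ k = 0) ?eqxx //; apply: (addrI u); by rewrite -H addr0.
Qed.

Lemma nbhdE : closed_nbhd u = g @: setT.
Proof.
apply/setP => x; rewrite /closed_nbhd in_setU1; apply/idP/idP.
- case/orP => [/eqP->|/imsetP [j _ ->]].
  + by apply/imsetP; exists None.
  + by apply/imsetP; exists (Some j).
- by case/imsetP => -[j|] _ -> /=; rewrite ?eqxx // orbC; apply/orP; left; apply/imsetP; exists j.
Qed.

Definition h o := M *m g o.

Lemma h_inj : injective h.
Proof. move=> a b /(congr1 (mulmx (invmx M))); rewrite !mulKmx //; exact: g_inj. Qed.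

Lemma imE : (fun x : vec n => M *m x) @: closed_nbhd u = h @: setT.
Proof. by rewrite nbhdE -imset_comp. Qed.

Lemma card_im : #|h @: setT| = n.+1.
Proof. by rewrite card_imset; [rewrite cardsT card_option card_ord | exact: h_inj]. Qed.

Lemma card_sel (i : 'I_n) :
  #|[set a in h @: setT | a i ord0 == 1]| =
  (((M *m u) i ord0 == 1%R) + #|[set j : 'I_n | ((M *m u) i ord0 + M i j == 1)%R]|)%N.
Proof.
have -> : [set a in h @: setT | a i ord0 == 1] = h @: [set o | h o i ord0 == 1].
  apply/setP => a; rewrite inE; apply/andP/imsetP.
  - by case=> /imsetP [o _ ->] H; exists o; rewrite ?inE.
  - by case=> o; rewrite inE => H ->; split => //; apply/imsetP; exists o.
rewrite card_imset; last exact: h_inj.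
rewrite (@card_opt _ (fun o => h o i ord0 == 1)); congr (_ + _)%N; apply: eq_card => j; rewrite !inE /h /=.
by rewrite mulmxDr /e_ -colE !mxE.
Qed.
Lemma bal_iff : balanced ((fun x : vec n => M *m x) @: closed_nbhd u) <->
  forall i : 'I_n, (2 * (((M *m u) i ord0 == 1%R) +
     #|[set j : 'I_n | ((M *m u) i ord0 + M i j == 1)%R]|) = n.+1)%N.
Proof.
rewrite /balanced imE card_im; split=> H i.
- by rewrite -card_sel; apply: H.
- by have := H i; rewrite -card_sel; apply.
Qed.
End S.

From mathcomp Require Import zify.

Theorem lemma3p6 (n : nat) (M : 'M['F_2]_n) :
  M \in unitmx ->
  (closed_neighbor_balanced (fun x : vec n => M *m x) <->
   forall i : 'I_n, (2 * #|[set j : 'I_n | M i j == 1%R]| = n + 1)%N).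
Proof.
move=> HM; split.
- case=> _ Hb i; have := (@bal_iff _ M 0 HM).1 (Hb 0) i.
  have -> : #|[set j | ((M *m (0 : vec n)) i ord0 + M i j == 1)%R]| = #|[set j | M i j == 1%R]|.
    by apply: eq_card => j; rewrite !inE mulmx0 mxE add0r.
  by rewrite mulmx0 mxE add0n addn1.
- move=> H; split.
    by exists (mulmx (invmx M)) => x; [exact: mulKmx | exact: mulKVmx].
  move=> u; apply/(@bal_iff _ M u HM) => i.
  have := H i; case: (F2_cases ((M *m u) i ord0)) => ->.
    have -> : #|[set j | ((0 : 'F_2) + M i j == 1)%R]| = #|[set j | M i j == 1%R]|.
      by apply: eq_card => j; rewrite !inE add0r.
    by rewrite add0n addn1.
  have -> : #|[set j | ((1 : 'F_2) + M i j == 1)%R]| = #|~: [set j | M i j == 1%R]|.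
    by apply: eq_card => j; rewrite !inE; case: (F2_cases (M i j)) => ->.
  have := cardsC [set j | M i j == 1%R]; rewrite card_ord /= => Hk.
  move=> Hi; lia.
Qed.
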